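(* Let $\{c_n\}_{n\in\mathbb Z}$ be complex numbers with $\{c_n\}_{n\ge0}\in NBVS$ and $\{c_n+c_{-n}\}_{n\ge0}\in NBVS$, and suppose $f(x)=\lim_{N\to\infty}\sum_{n=-N}^Nc_ne^{inx}$ exists for all $x$ and $f\in C_{2\pi}$. Then there is a constant $K$, depending only on these sequences, such that for all $m\ge1$ and all $x\in[0,\pi]$, $$\Big|\sum_{k=m}^\infty c_k\sin kx\Big|\le K\max_{k\ge m}k\big(|c_k|+|c_{-k}|\big)\quad\text{and}\quad\Big|\sum_{k=m}^\infty c_{-k}\sin kx\Big|\le K\max_{k\ge m}k\big(|c_k|+|c_{-k}|\big).$$
   Context: For $\theta_0\in[0,\pi/2)$ let $M(\theta_0)=\{z\in\mathbb C: |\arg z|\le\theta_0\}$ (with $0\in M(\theta_0)$). Write $\Delta c_n=c_n-c_{n+1}$. A complex sequence $\mathbf C=\{c_n\}$ belongs to $NBVS$ if there is $\theta_0\in[0,\pi/2)$ with $c_n\in M(\theta_0)$ for all $n\ge1$ and a constant $K(\mathbf C)>0$ such that $\sum_{n=m}^{2m}|\Delta c_n|\le K(\mathbf C)\big(|c_m|+|c_{2m}|\big)$ for all $m\ge1$. $C_{2\pi}$ denotes the continuous $2\pi$-periodic complex functions. *)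

(* Defs.v *)
From Stdlib Require Import Reals ZArith.
From Coquelicot Require Import Coquelicot.
Open Scope R_scope.

(* M(theta0) = { z : |arg z| <= theta0 } together with 0:
   z = 0, or z = r e^{i phi} with r > 0 and -theta0 <= phi <= theta0. *)
Definition inM (theta0 : R) (z : C) : Prop :=
  z = 0%C \/
  exists r phi : R, 0 < r /\ - theta0 <= phi <= theta0 /\
                    z = (r * cos phi, r * sin phi)%R.

Definition Delta (c : nat -> C) (n : nat) : C := (c n - c (S n))%C.

Definition NBVS (c : nat -> C) : Prop :=
  (exists theta0 : R, 0 <= theta0 < PI / 2 /\
     forall n : nat, (1 <= n)%nat -> inM theta0 (c n)) /\
  (exists K : R, 0 < K /\
     forall m : nat, (1 <= m)%nat ->
       sum_n_m (fun n => Cmod (Delta c n)) m (2 * m)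
         <= K * (Cmod (c m) + Cmod (c (2 * m)%nat))).

Definition cexpi (t : R) : C := (cos t, sin t).

Definition sym_partial_sum (c : Z -> C) (x : R) (N : nat) : C :=
  sum_n_m (fun k : nat =>
             let n := (Z.of_nat k - Z.of_nat N)%Z in
             (c n * cexpi (IZR n * x))%C) 0 (2 * N).

Definition wk (c : Z -> C) (k : nat) : R :=
  INR k * (Cmod (c (Z.of_nat k)) + Cmod (c (- Z.of_nat k)%Z)).

Definition tail_sup (c : Z -> C) (m : nat) : Rbar :=
  Sup_seq (fun j : nat => Finite (wk c (m + j)%nat)).

Definition sin_tail_term (c : Z -> C) (sgn : bool) (m : nat) (x : R) (j : nat) : C :=
  let k := (m + j)%nat in
  (c (if sgn then Z.of_nat k else (- Z.of_nat k)%Z) * RtoC (sin (INR k * x)))%C.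

(* Main.v *)
Require Import Defs.
From Stdlib Require Import Reals ZArith.
From Stdlib Require Import Lra Lia Arith.
From Coquelicot Require Import Coquelicot.
Open Scope R_scope.

Lemma Rplus_plus (a b : R) : plus a b = a + b.
Proof. reflexivity. Qed.

Lemma sin_mult_bound (n : nat) (t : R) : Rabs (sin (INR n * t)) <= INR n * Rabs (sin t).
Proof.
  induction n as [|n IH].
  - simpl. rewrite Rmult_0_l, sin_0, Rabs_R0. lra.
  - rewrite S_INR. replace ((INR n + 1) * t) with (INR n * t + t) by ring.
    rewrite sin_plus.
    pose proof (Rabs_triang (sin (INR n * t) * cos t) (cos (INR n * t) * sin t)).
    rewrite !Rabs_mult in H.
    pose proof (COS_bound t). pose proof (COS_bound (INR n * t)).
    assert (Rabs (cos t) <= 1) by (apply Rabs_le; lra).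
    assert (Rabs (cos (INR n * t)) <= 1) by (apply Rabs_le; lra).
    pose proof (Rabs_pos (sin t)). pose proof (Rabs_pos (sin (INR n*t))).
    pose proof (Rabs_pos (cos t)). pose proof (Rabs_pos (cos (INR n*t))).
    nra.
Qed.

Lemma sum_nonneg (g : nat -> R) n p : (forall k, 0 <= g k) -> 0 <= sum_n_m g n p.
Proof.
  intros H. destruct (le_lt_dec n p) as [h|h].
  - induction h. rewrite sum_n_n; auto.
    rewrite sum_n_Sm by lia. rewrite Rplus_plus. specialize (H (S m)). lra.
  - rewrite sum_n_m_zero by lia. apply Rle_refl.
Qed.

Lemma sum_mono (g : nat -> R) n p q : (forall k, 0 <= g k) -> (p <= q)%nat ->
  sum_n_m g n p <= sum_n_m g n q.
Proof.
  intros H hpq. destruct (le_lt_dec n (S p)) as [h|h].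
  - rewrite (sum_n_m_Chasles g n p q) by lia. rewrite Rplus_plus.
    pose proof (sum_nonneg g (S p) q H). lra.
  - rewrite sum_n_m_zero by lia. apply sum_nonneg; auto.
Qed.

Lemma abel (u T : nat -> R) (a d : nat) :
  sum_n_m (fun k => u k * (T (S k) - T k)) a (a + d) =
  u (S (a + d)) * T (S (a + d)) - u a * T a +
  sum_n_m (fun k => (u k - u (S k)) * T (S k)) a (a + d).
Proof.
  induction d as [|d IH].
  - rewrite Nat.add_0_r, !sum_n_n. simpl. ring.
  - replace (a + S d)%nat with (S (a + d)) by lia.
    rewrite !sum_n_Sm by lia. rewrite IH. unfold plus; simpl. ring.
Qed.

Lemma Rabs_sum (g : nat -> R) n p : Rabs (sum_n_m g n p) <= sum_n_m (fun k => Rabs (g k)) n p.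
Proof. apply (norm_sum_n_m (V:=R_NormedModule)). Qed.

Lemma sum_scal_l (c : R) (g : nat -> R) n p : sum_n_m (fun k => c * g k) n p = c * sum_n_m g n p.
Proof. apply (sum_n_m_mult_l (K:=R_Ring)). Qed.

Section Main.
Variables (u v : nat -> R) (KA W : R) (m : nat).
Hypothesis hm : (1 <= m)%nat.
Hypothesis hKA : 0 < KA.
Hypothesis hv : forall k, Rabs (u k) <= v k.
Hypothesis hW : forall k, (m <= k)%nat -> INR k * v k <= W.
Hypothesis hblk : forall n, (1 <= n)%nat ->
  sum_n_m (fun i => Rabs (u i - u (S i))) n (2 * n) <= KA * (v n + v (2 * n)).

Lemma W_nonneg : 0 <= W.
Proof.
  pose proof (hW m (le_n m)). pose proof (hv m). pose proof (Rabs_pos (u m)).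
  pose proof (pos_INR m). nra.
Qed.

Lemma v_le k : (m <= k)%nat -> v k <= W / INR k.
Proof.
  intros hk. assert (0 < INR k) by (apply lt_0_INR; lia).
  pose proof (hW k hk). apply Rmult_le_reg_l with (INR k); auto.
  field_simplify; lra.
Qed.

Let du := fun i => Rabs (u i - u (S i)).

Lemma dyadic N : (m <= N)%nat -> forall J,
  sum_n_m du N ((2 ^ J)%nat * N - 1) <= 3 * KA * W / INR N * (1 - / 2 ^ J).
Proof.
  intros hN. assert (0 < INR N) by (apply lt_0_INR; lia).
  pose proof W_nonneg.
  induction J as [|J IH].
  - simpl. rewrite sum_n_m_zero by lia. simpl. rewrite Rinv_1. change (@zero R_AbelianMonoid) with 0. lra.
  - set (n := ((2 ^ J)%nat * N)%nat) in *.
    assert (hn1 : (N <= n)%nat).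
    { unfold n. pose proof (Nat.pow_gt_lin_r 2 J ltac:(lia)). assert (1 <= 2^J)%nat by lia. rewrite <- (Nat.mul_1_l N) at 1. apply Nat.mul_le_mono_r; lia. }
    assert (Hn : INR n = 2 ^ J * INR N) by (unfold n; rewrite mult_INR, pow_INR; reflexivity).
    assert (H2 : ((2 ^ S J)%nat * N - 1)%nat = (2 * n - 1)%nat) by (unfold n; rewrite Nat.pow_succ_r'; lia).
    rewrite H2.
    rewrite (sum_n_m_Chasles du N (n - 1) (2 * n - 1)) by lia.
    replace (S (n - 1)) with n by lia. rewrite Rplus_plus.
    assert (hb : sum_n_m du n (2 * n - 1) <= KA * (v n + v (2 * n))).
    { eapply Rle_trans; [apply sum_mono; [intro; apply Rabs_pos | ] | apply hblk]; lia. }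
    pose proof (v_le n ltac:(lia)) as H3. pose proof (v_le (2*n) ltac:(lia)) as H4.
    rewrite mult_INR in H4. rewrite Hn in H3, H4.
    assert (0 < 2 ^ J) by (apply pow_lt; lra).
    assert (KA * (v n + v (2 * n)) <= KA * (W / (2 ^ J * INR N) + W / (INR 2 * (2 ^ J * INR N)))) by (apply Rmult_le_compat_l; lra).
    replace (3 * KA * W / INR N * (1 - / 2 ^ S J)) with
      (3 * KA * W / INR N * (1 - / 2 ^ J) + KA * (W / (2 ^ J * INR N) + W / (INR 2 * (2 ^ J * INR N)))).
    + lra.
    + simpl. field. lra.
Qed.

Lemma tail_du a b : (m <= a)%nat -> sum_n_m du a b <= 3 * KA * W / INR a.
Proof.
  intros ha. assert (0 < INR a) by (apply lt_0_INR; lia).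
  pose proof W_nonneg.
  eapply Rle_trans. apply (sum_mono du a b ((2 ^ S b)%nat * a - 1)).
  intro; apply Rabs_pos. pose proof (Nat.pow_gt_lin_r 2 (S b) ltac:(lia)). nia.
  eapply Rle_trans. apply dyadic; auto.
  assert (0 < / 2 ^ S b) by (apply Rinv_0_lt_compat, pow_lt; lra).
  assert (0 <= 3 * KA * W / INR a).
  { unfold Rdiv. apply Rmult_le_pos; [nra| left; apply Rinv_0_lt_compat; auto]. }
  nra.
Qed.



Definition Tf (x : R) (j : nat) : R := - cos ((INR j - / 2) * x) / (2 * sin (x / 2)).

Lemma trig_tel x k : sin (x / 2) <> 0 -> sin (INR k * x) = Tf x (S k) - Tf x k.
Proof.
  intros hs. unfold Tf. rewrite S_INR.
  replace ((INR k + 1 - / 2) * x) with (INR k * x + x / 2) by field.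
  replace ((INR k - / 2) * x) with (INR k * x - x / 2) by field.
  rewrite cos_plus, cos_minus. field. auto.
Qed.

Lemma Tf_bound x j : 0 < sin (x / 2) -> Rabs (Tf x j) <= / (2 * sin (x / 2)).
Proof.
  intros hs. unfold Tf. unfold Rdiv. rewrite Rabs_mult, Rabs_Ropp.
  rewrite (Rabs_right (/ _)) by (left; apply Rinv_0_lt_compat; lra).
  pose proof (COS_bound ((INR j - / 2) * x)).
  assert (Rabs (cos ((INR j - / 2) * x)) <= 1) by (apply Rabs_le; lra).
  assert (0 < / (2 * sin (x / 2))) by (apply Rinv_0_lt_compat; lra).
  nra.
Qed.

Lemma abel_bound x a d : 0 < sin (x / 2) -> (m <= a)%nat ->
  Rabs (sum_n_m (fun k => u k * sin (INR k * x)) a (a + d))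
  <= (2 + 3 * KA) * W / (2 * sin (x / 2) * INR a).
Proof.
  intros hs ha.
  assert (0 < INR a) by (apply lt_0_INR; lia).
  pose proof W_nonneg as HW.
  rewrite (sum_n_m_ext _ (fun k => u k * (Tf x (S k) - Tf x k))).
  2:{ intro k. rewrite trig_tel; [reflexivity | lra]. }
  rewrite abel.
  set (s := sin (x / 2)) in *.
  set (b := (a + d)%nat).
  assert (hu1 : Rabs (u (S b) * Tf x (S b)) <= W / INR a * / (2 * s)).
  { rewrite Rabs_mult. apply Rmult_le_compat; try apply Rabs_pos.
    - eapply Rle_trans. apply hv. eapply Rle_trans. apply v_le. lia.
      unfold Rdiv. apply Rmult_le_compat_l; auto.
      apply Rinv_le_contravar; auto. apply le_INR; lia.
    - apply Tf_bound; auto. }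
  assert (hu2 : Rabs (u a * Tf x a) <= W / INR a * / (2 * s)).
  { rewrite Rabs_mult. apply Rmult_le_compat; try apply Rabs_pos.
    - eapply Rle_trans. apply hv. apply v_le. lia.
    - apply Tf_bound; auto. }
  assert (hu3 : Rabs (sum_n_m (fun k => (u k - u (S k)) * Tf x (S k)) a b)
                <= 3 * KA * W / INR a * / (2 * s)).
  { eapply Rle_trans. apply Rabs_sum.
    eapply Rle_trans. apply (sum_n_m_le _ (fun k => / (2 * s) * du k)).
    { intro k. rewrite Rabs_mult. unfold du. rewrite Rmult_comm.
      apply Rmult_le_compat_r. apply Rabs_pos. apply Tf_bound; auto. }
    rewrite sum_scal_l. rewrite Rmult_comm. apply Rmult_le_compat_r.
    left; apply Rinv_0_lt_compat; lra. apply tail_du; auto. }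
  pose proof (Rabs_triang (u (S b) * Tf x (S b) - u a * Tf x a)
     (sum_n_m (fun k => (u k - u (S k)) * Tf x (S k)) a b)).
  assert (Rabs (u (S b) * Tf x (S b) - u a * Tf x a) <= Rabs (u (S b) * Tf x (S b)) + Rabs (u a * Tf x a)).
  { unfold Rminus. eapply Rle_trans; [apply Rabs_triang| rewrite Rabs_Ropp; lra]. }
  replace ((2 + 3 * KA) * W / (2 * s * INR a)) with
    (W / INR a * / (2 * s) + W / INR a * / (2 * s) + 3 * KA * W / INR a * / (2 * s))
    by (field; lra).
  lra.
Qed.

End Main.

Lemma sum_shift (h : nat -> R) m n d :
  sum_n_m (fun j => h (m + j)%nat) n (n + d)%nat = sum_n_m h (m + n)%nat (m + n + d)%nat.
Proof.
  induction d as [|d IH].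
  - rewrite !Nat.add_0_r, !sum_n_n. reflexivity.
  - replace (n + S d)%nat with (S (n + d)) by lia.
    replace (m + n + S d)%nat with (S (m + n + d)) by lia.
    rewrite !sum_n_Sm by lia. rewrite IH. f_equal. f_equal. lia.
Qed.

Lemma is_series_zero_R (g : nat -> R) : (forall j, g j = 0) -> is_series g 0.
Proof.
  intros H. unfold is_series. eapply filterlim_ext; [| apply filterlim_const].
  intro n. simpl. unfold sum_n. rewrite (sum_n_m_ext _ (fun _ => 0)) by auto.
  rewrite sum_n_m_const. ring.
Qed.

Lemma real_series (u v : nat -> R) (KA W : R) (m : nat) (x : R) :
  (1 <= m)%nat -> 0 < KA ->
  (forall k, Rabs (u k) <= v k) ->
  (forall k, (m <= k)%nat -> INR k * v k <= W) ->
  (forall n, (1 <= n)%nat ->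
     sum_n_m (fun i => Rabs (u i - u (S i))) n (2 * n)%nat <= KA * (v n + v (2 * n)%nat)) ->
  0 <= x <= PI ->
  exists S, is_series (fun j => u (m + j)%nat * sin (INR (m + j) * x)) S /\
            Rabs S <= (3 + 2 * KA) * W.
Proof.
  intros hm hKA hv hW hblk hx.
  pose proof (W_nonneg u v W m hv hW) as HW.
  destruct (Req_dec x 0) as [->|hx0].
  { exists 0. split.
    - apply is_series_zero_R. intro j. rewrite Rmult_0_r, sin_0. ring.
    - rewrite Rabs_R0. nra. }
  assert (hs : 0 < sin (x / 2)) by (apply sin_gt_0; lra).
  set (s := sin (x / 2)) in *.
  set (h := fun k => u k * sin (INR k * x)).
  set (g := fun j => h (m + j)%nat).
  assert (hab : forall a d, (m <= a)%nat ->
     Rabs (sum_n_m h a (a + d)) <= (2 + 3 * KA) * W / (2 * s * INR a)).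
  { intros a d ha. apply (abel_bound u v KA W m hm hKA hv hW hblk); auto. }
  assert (hex : ex_series g).
  { apply (ex_series_Cauchy (V := R_CompleteNormedModule)).
    intros eps.
    destruct (INR_unbounded ((2 + 3 * KA) * W / (2 * s * eps))) as [A hA].
    exists A. intros n n' hn hn'.
    destruct (le_lt_dec n n') as [hle|hlt].
    - replace n' with (n + (n' - n))%nat by lia.
      change (Rabs (sum_n_m g n (n + (n' - n))) < eps).
      unfold g. rewrite sum_shift.
      eapply Rle_lt_trans. apply hab. lia.
      assert (0 <= (2 + 3 * KA) * W / (2 * s * eps)).
      { apply Rmult_le_pos. nra. left; apply Rinv_0_lt_compat.
        pose proof (cond_pos eps). nra. }
      assert (INR A <= INR (m + n)) by (apply le_INR; lia).
      pose proof (cond_pos eps).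
      set (C0 := (2 + 3 * KA) * W) in *.
      assert (hI : INR (m + n) > C0 / (2 * s * eps)) by lra.
      assert (0 < INR (m + n)) by lra.
      assert (hC : C0 < INR (m + n) * (2 * s * eps)).
      { apply (Rmult_lt_compat_r (2 * s * eps)) in hI; [|nra].
        unfold Rdiv in hI. rewrite Rmult_assoc, Rinv_l in hI by nra. lra. }
      apply (Rmult_lt_reg_r (2 * s * INR (m + n))). nra.
      unfold Rdiv. rewrite Rmult_assoc, Rinv_l by nra. nra.
    - rewrite sum_n_m_zero by lia. change (Rabs 0 < eps). rewrite Rabs_R0.
      apply cond_pos. }
  assert (hpt : forall j, Rabs (g j) <= 2 * s * W).
  { intro j. unfold g, h. set (k := (m + j)%nat). rewrite Rabs_mult.
    assert (hsk : Rabs (sin (INR k * x)) <= 2 * INR k * s).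
    { replace (INR k * x) with (INR (2 * k) * (x / 2)) by (rewrite mult_INR; simpl; field).
      eapply Rle_trans. apply sin_mult_bound. rewrite mult_INR, Rabs_right by (unfold s in hs; lra).
      simpl. fold s. lra. }
    pose proof (hW k ltac:(unfold k; lia)). pose proof (hv k). pose proof (Rabs_pos (u k)).
    pose proof (Rabs_pos (sin (INR k * x))). pose proof (pos_INR k).
    assert (Rabs (u k) * Rabs (sin (INR k * x)) <= v k * (2 * INR k * s)).
    { apply Rmult_le_compat; auto. }
    nra. }
  assert (hhead : forall p, Rabs (sum_n_m h m (m + p)%nat) <= 2 * s * W * (INR p + 1)).
  { intro p. replace (m + p)%nat with (m + 0 + p)%nat by lia.
    replace m with (m + 0)%nat at 1 by lia.
    rewrite <- sum_shift. fold g. simpl.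
    eapply Rle_trans. apply Rabs_sum.
    eapply Rle_trans. apply (sum_n_m_le _ (fun _ => 2 * s * W)). auto.
    rewrite sum_n_m_const. rewrite Nat.sub_0_r, S_INR. lra. }
  destruct (nfloor_ex (/ s)) as [N0 [hN0a hN0b]].
  { left; apply Rinv_0_lt_compat; auto. }
  assert (hsN0 : s * INR N0 <= 1).
  { apply (Rmult_le_compat_l s) in hN0a; [|lra]. rewrite Rinv_r in hN0a; lra. }
  assert (hsN : 1 < s * INR (m + N0)).
  { rewrite plus_INR. assert (1 <= INR m) by (apply (le_INR 1) in hm; simpl in hm; lra).
    apply (Rmult_lt_compat_l s) in hN0b; [|lra]. rewrite Rinv_r in hN0b by lra. nra. }
  assert (htail : forall d, Rabs (sum_n_m h (m + N0)%nat (m + N0 + d)%nat) <= (1 + 3/2 * KA) * W).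
  { intro d. eapply Rle_trans. apply hab. lia.
    replace ((1 + 3/2 * KA) * W) with ((2 + 3 * KA) * W * / 2) by field.
    unfold Rdiv. apply Rmult_le_compat_l. nra.
    apply Rinv_le_contravar; lra. }
  assert (hps : forall n, Rabs (sum_n g n) <= (3 + 2 * KA) * W).
  { intro n. unfold sum_n. change (sum_n_m g 0 n) with (sum_n_m g 0 (0 + n)%nat).
    unfold g. rewrite sum_shift. rewrite !Nat.add_0_r.
    destruct (le_lt_dec N0 n) as [hle|hlt].
    - destruct N0 as [|N1].
      + rewrite Nat.add_0_r in htail. specialize (htail n). nra.
      + rewrite (sum_n_m_Chasles h m (m + N1) (m + n)) by lia.
        replace (S (m + N1)) with (m + S N1)%nat by lia.
        replace (m + n)%nat with (m + S N1 + (n - S N1))%nat by lia.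
        rewrite Rplus_plus.
        pose proof (hhead N1). pose proof (htail (n - S N1)%nat).
        pose proof (Rabs_triang (sum_n_m h m (m + N1)) (sum_n_m h (m + S N1) (m + S N1 + (n - S N1)))).
        rewrite S_INR in hsN0. nra.
    - pose proof (hhead n).
      assert (INR n + 1 <= INR N0) by (rewrite <- S_INR; apply le_INR; lia).
      assert (s * (INR n + 1) <= 1) by nra.
      assert (W * (s * (INR n + 1)) <= W * 1) by (apply Rmult_le_compat_l; lra). nra. }
  exists (Series g). split. apply Series_correct; auto.
  pose proof (Series_correct g hex) as HS.
  assert (Hle : Rbar_le (Rabs (Series g)) ((3 + 2 * KA) * W)).
  { apply (is_lim_seq_le (fun n => Rabs (sum_n g n)) (fun _ => (3 + 2 * KA) * W)).
    intro; auto. apply (is_lim_seq_abs _ (Series g)). exact HS. apply is_lim_seq_const. }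
  simpl in Hle. exact Hle.
Qed.

Lemma sum_n_pair (a b : nat -> R) n :
  @sum_n C_AbelianMonoid (fun j => (a j, b j)) n = (sum_n a n, sum_n b n).
Proof.
  induction n as [|n IH].
  - unfold sum_n. rewrite !sum_n_n. reflexivity.
  - unfold sum_n in *. rewrite !sum_n_Sm by lia. rewrite IH. reflexivity.
Qed.

Lemma is_series_pair (a b : nat -> R) A B :
  is_series a A -> is_series b B ->
  @is_series C_AbsRing C_NormedModule (fun j => (a j, b j)) (A, B).
Proof.
  intros Ha Hb. unfold is_series in *.
  eapply filterlim_ext. intro n. symmetry. apply sum_n_pair.
  intros P [eps HP].
  specialize (Ha (ball A eps) (locally_ball A eps)).
  specialize (Hb (ball B eps) (locally_ball B eps)).
  destruct Ha as [N1 H1]. destruct Hb as [N2 H2].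
  exists (max N1 N2). intros n hn. apply HP. split; simpl.
  - apply H1. lia.
  - apply H2. lia.
Qed.

Lemma Cmod_le_sum (z : C) : Cmod z <= Rabs (fst z) + Rabs (snd z).
Proof.
  destruct z as [a b]. simpl. unfold Cmod. simpl.
  rewrite <- (sqrt_Rsqr (Rabs a + Rabs b)) by (pose proof (Rabs_pos a); pose proof (Rabs_pos b); lra).
  apply sqrt_le_1_alt. unfold Rsqr.
  pose proof (Rabs_pos a); pose proof (Rabs_pos b).
  assert (a * a = Rabs a * Rabs a) by (rewrite <- Rabs_mult; rewrite Rabs_right; nra).
  assert (b * b = Rabs b * Rabs b) by (rewrite <- Rabs_mult; rewrite Rabs_right; nra).
  nra.
Qed.

Lemma im_le_Cmod (z : C) : Rabs (snd z) <= Cmod z.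
Proof. eapply Rle_trans; [apply Rmax_r | apply Rmax_Cmod]. Qed.

Lemma complex_series (a : nat -> C) (KA W : R) (m : nat) (x : R) :
  (1 <= m)%nat -> 0 < KA ->
  (forall k, (m <= k)%nat -> INR k * Cmod (a k) <= W) ->
  (forall n, (1 <= n)%nat ->
     sum_n_m (fun i => Cmod (a i - a (S i))%C) n (2 * n)%nat <= KA * (Cmod (a n) + Cmod (a (2 * n)%nat))) ->
  0 <= x <= PI ->
  exists S : C, is_series (fun j => (a (m + j)%nat * RtoC (sin (INR (m + j) * x)))%C) S /\
            Cmod S <= 2 * ((3 + 2 * KA) * W).
Proof.
  intros hm hKA hW hblk hx.
  destruct (real_series (fun k => fst (a k)) (fun k => Cmod (a k)) KA W m x hm hKA)
    as [S1 [HS1 HB1]]; auto.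
  { intro k. apply re_le_Cmod. }
  { intros n hn. eapply Rle_trans; [|apply hblk; auto]. apply sum_n_m_le.
    intro i. eapply Rle_trans; [|apply re_le_Cmod]. simpl. right. f_equal. }
  destruct (real_series (fun k => snd (a k)) (fun k => Cmod (a k)) KA W m x hm hKA)
    as [S2 [HS2 HB2]]; auto.
  { intro k. apply im_le_Cmod. }
  { intros n hn. eapply Rle_trans; [|apply hblk; auto]. apply sum_n_m_le.
    intro i. eapply Rle_trans; [|apply im_le_Cmod]. simpl. right. f_equal. }
  exists (S1, S2). split.
  - eapply is_series_ext; [|apply (is_series_pair _ _ _ _ HS1 HS2)].
    intro j. simpl. destruct (a (m + j)%nat) as [p q]. unfold RtoC, Cmult. simpl.
    f_equal; ring.
  - eapply Rle_trans. apply Cmod_le_sum. simpl. lra.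
Qed.

Theorem lemma6 (c : Z -> C) (f : R -> C) :
  NBVS (fun n : nat => c (Z.of_nat n)) ->
  NBVS (fun n : nat => (c (Z.of_nat n) + c (- Z.of_nat n)%Z)%C) ->
  (forall x : R, filterlim (sym_partial_sum c x) eventually (locally (f x))) ->
  (forall x : R, continuous f x) ->
  (forall x : R, f (x + 2 * PI) = f x) ->
  exists K : R,
    forall (m : nat) (x : R),
      (1 <= m)%nat -> 0 <= x <= PI ->
      (exists B : R, forall k : nat, (m <= k)%nat -> wk c k <= B) ->
      (exists S : C, is_series (sin_tail_term c true m x) S /\
                     Cmod S <= K * real (tail_sup c m)) /\
      (exists S : C, is_series (sin_tail_term c false m x) S /\
                     Cmod S <= K * real (tail_sup c m)).
Proof.
  intros hc hb _ _ _.
  destruct hc as [_ [K1 [hK1 hblk1]]]. destruct hb as [_ [K2 [hK2 hblk2]]].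
  exists (2 * (3 + 2 * K1) + 2 * (3 + 2 * K2)).
  intros m x hm hx [B hB].
  set (u := fun j : nat => Finite (wk c (m + j))).
  assert (Hfin : exists l, Sup_seq u = Finite l).
  { pose proof (Sup_seq_correct u) as Hs.
    destruct (Sup_seq u) as [l| |] eqn:E.
    - eauto.
    - exfalso. destruct (Hs B) as [n Hn]. unfold u in Hn. simpl in Hn.
      pose proof (hB (m + n)%nat ltac:(lia)). lra.
    - exfalso. pose proof (Hs (wk c m) 0%nat) as Hn. unfold u in Hn. simpl in Hn.
      rewrite Nat.add_0_r in Hn. lra. }
  destruct Hfin as [l Hl].
  assert (HW : forall k, (m <= k)%nat -> wk c k <= l).
  { intros k hk. pose proof (is_sup_seq_major u _ (k - m) (Sup_seq_correct u)) as H.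
    rewrite Hl in H. unfold u in H. simpl in H. replace (m + (k - m))%nat with k in H by lia.
    exact H. }
  unfold tail_sup. fold u. rewrite Hl. simpl.
  assert (Hl0 : 0 <= l).
  { eapply Rle_trans; [|apply (HW m); lia]. unfold wk.
    pose proof (pos_INR m). pose proof (Cmod_ge_0 (c (Z.of_nat m))).
    pose proof (Cmod_ge_0 (c (- Z.of_nat m)%Z)). nra. }
  set (a1 := fun n : nat => c (Z.of_nat n)).
  set (a2 := fun n : nat => (c (Z.of_nat n) + c (- Z.of_nat n)%Z)%C).
  assert (hw1 : forall k, (m <= k)%nat -> INR k * Cmod (a1 k) <= l).
  { intros k hk. eapply Rle_trans; [|apply (HW k hk)]. unfold wk, a1.
    cbv beta. apply Rmult_le_compat_l; [apply pos_INR|]. pose proof (Cmod_ge_0 (c (- Z.of_nat k)%Z)). lra. }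
  assert (hw2 : forall k, (m <= k)%nat -> INR k * Cmod (a2 k) <= l).
  { intros k hk. eapply Rle_trans; [|apply (HW k hk)]. unfold wk, a2.
    pose proof (pos_INR k). apply Rmult_le_compat_l; auto. apply Cmod_triangle. }
  destruct (complex_series a1 K1 l m x hm hK1 hw1 (fun n hn => hblk1 n hn) hx) as [S1 [HS1 HB1]].
  destruct (complex_series a2 K2 l m x hm hK2 hw2 (fun n hn => hblk2 n hn) hx) as [S2 [HS2 HB2]].
  split.
  - exists S1. split.
    + eapply is_series_ext; [|exact HS1]. intro j. reflexivity.
    + nra.
  - exists (plus S2 (opp S1)). split.
    + eapply is_series_ext; [|exact (is_series_minus _ _ _ _ HS2 HS1)].
      intro j. unfold sin_tail_term, a1, a2. simpl.
      destruct (c (Z.of_nat (m + j))) as [p q].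
      destruct (c (- Z.of_nat (m + j))%Z) as [p' q'].
      unfold Cplus, Cmult, Copp, RtoC. simpl. change plus with Cplus. change opp with Copp. unfold Cplus, Copp. simpl. f_equal; ring.
    + change (Cmod (S2 + - S1)%C <= (2 * (3 + 2 * K1) + 2 * (3 + 2 * K2)) * l).
      eapply Rle_trans. apply Cmod_triangle. rewrite Cmod_opp. nra.
Qed.
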